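(* Every formula occurring in a tree-like $\mathrm{LM}_{\rightarrow}$ deduction $\partial$ of a sequent $S$ is a semi-subformula of a formula occurring in $S$. In particular, if $S$ is $\Rightarrow\rho$, then every formula $\alpha$ occurring in $\partial$ is a semi-subformula of $\rho$, hence $|\alpha|\le|\rho|$, and thus $\mu(\partial)\le|\rho|$.
   Context: Formulas of $\mathcal{L}_{\rightarrow}$ are built from propositional variables using only $\rightarrow$; $|\alpha|$ is the number of occurrences of $\rightarrow$ in $\alpha$. The semi-subformulas of $\rho$ form the least set containing $\rho$ such that whenever $\alpha\rightarrow\beta$ is in it, so are $\alpha$ and $\beta$, and whenever $(\alpha\rightarrow\beta)\rightarrow\gamma$ is in it, so is $\beta\rightarrow\gamma$. Sequents are $\Gamma\Rightarrow\alpha$ with $\Gamma$ a finite multiset. $\mathrm{LM}_{\rightarrow}$ has axioms $\Gamma,p\Rightarrow p$ ($p$ a variable) and rules: from $\Gamma,\alpha\Rightarrow\beta$ infer $\Gamma\Rightarrow\alpha\rightarrow\beta$ provided $\Gamma$ contains no $(\alpha\rightarrow\beta)\rightarrow\gamma$; from $\Gamma,\alpha,\beta\rightarrow\gamma\Rightarrow\beta$ infer $\Gamma,(\alpha\rightarrow\beta)\rightarrow\gamma\Rightarrow\alpha\rightarrow\beta$; from $\Gamma,p,\gamma\Rightarrow q$ infer $\Gamma,p,p\rightarrow\gamma\Rightarrow q$ ($p\neq q$ variables, $q$ occurring in $\Gamma$ or $\gamma$); from $\Gamma,\alpha,\beta\rightarrow\gamma\Rightarrow\beta$ and $\Gamma,\gamma\Rightarrow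 q$ infer $\Gamma,(\alpha\rightarrow\beta)\rightarrow\gamma\Rightarrow q$ ($q$ a variable occurring in $\Gamma$ or $\gamma$). $\mu(\partial)$ is the maximum of $|\alpha|$ over formulas $\alpha$ occurring in $\partial$. *)

(* Defs.v *)
(* Implicational formulas, semi-subformulas, and tree-like
   LM-> deductions. Antecedents are multisets, represented as lists taken
   up to permutation. *)
From Stdlib Require Import List Permutation Arith.
Import ListNotations.

Inductive formula : Type :=
| Var : nat -> formula
| Imp : formula -> formula -> formula.

Fixpoint fsize (a : formula) : nat :=
  match a with
  | Var _ => 0
  | Imp a b => S (fsize a + fsize b)
  end.

Fixpoint var_occ (q : nat) (a : formula) : Prop :=
  match a with
  | Var p => p = q
  | Imp a b => var_occ q a \/ var_occ q b
  end.

Definition var_occ_ctx (q : nat) (G : list formula) : Prop :=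
  exists a, In a G /\ var_occ q a.

Inductive semisub (r : formula) : formula -> Prop :=
| ss_refl : semisub r r
| ss_left : forall a b, semisub r (Imp a b) -> semisub r a
| ss_right : forall a b, semisub r (Imp a b) -> semisub r b
| ss_semi : forall a b g, semisub r (Imp (Imp a b) g) -> semisub r (Imp b g).

Inductive deriv : list formula -> formula -> Type :=
| d_ax : forall (D G : list formula) (p : nat),
    Permutation D (Var p :: G) ->
    deriv D (Var p)
| d_impR : forall (D D1 G : list formula) (a b : formula),
    Permutation D G ->
    Permutation D1 (a :: G) ->
    (forall g, ~ In (Imp (Imp a b) g) G) ->
    deriv D1 b ->
    deriv D (Imp a b)
| d_impimpR : forall (D D1 G : list formula) (a b g : formula),
    Permutation D (Imp (Imp a b) g :: G) ->
    Permutation D1 (a :: Imp b g :: G) ->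
    deriv D1 b ->
    deriv D (Imp a b)
| d_varL : forall (D D1 G : list formula) (p q : nat) (g : formula),
    p <> q ->
    (var_occ_ctx q G \/ var_occ q g) ->
    Permutation D (Var p :: Imp (Var p) g :: G) ->
    Permutation D1 (Var p :: g :: G) ->
    deriv D1 (Var q) ->
    deriv D (Var q)
| d_impimpL : forall (D D1 D2 G : list formula) (a b g : formula) (q : nat),
    (var_occ_ctx q G \/ var_occ q g) ->
    Permutation D (Imp (Imp a b) g :: G) ->
    Permutation D1 (a :: Imp b g :: G) ->
    Permutation D2 (g :: G) ->
    deriv D1 b ->
    deriv D2 (Var q) ->
    deriv D (Var q).

Fixpoint dformulas {D c} (d : deriv D c) : list formula :=
  match d with
  | d_ax D _ _ _ => c :: D
  | d_impR D _ _ _ _ _ _ _ d1 => c :: D ++ dformulas d1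
  | d_impimpR D _ _ _ _ _ _ _ d1 => c :: D ++ dformulas d1
  | d_varL D _ _ _ _ _ _ _ _ _ d1 => c :: D ++ dformulas d1
  | d_impimpL D _ _ _ _ _ _ _ _ _ _ _ d1 d2 =>
      c :: D ++ dformulas d1 ++ dformulas d2
  end.

Definition occurs_in {D c} (a : formula) (d : deriv D c) : Prop :=
  In a (dformulas d).

Definition mu {D c} (d : deriv D c) : nat :=
  fold_right Nat.max 0 (map fsize (dformulas d)).

(* Main.v *)
Require Import Defs.
From Stdlib Require Import List Permutation Arith Lia.
Import ListNotations.

Lemma ss_trans : forall x y z, semisub x y -> semisub y z -> semisub x z.
Proof.
  intros x y z H1 H2. induction H2.
  - exact H1.
  - eapply ss_left; eauto.
  - eapply ss_right; eauto.
  - eapply ss_semi; eauto.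
Qed.

Definition covered (D : list formula) (c x : formula) : Prop :=
  exists b, (In b D \/ b = c) /\ semisub b x.

Lemma lift : forall D c D1 c1,
  (forall x, In x D1 \/ x = c1 -> covered D c x) ->
  forall a, covered D1 c1 a -> covered D c a.
Proof.
  intros D c D1 c1 H a [b [Hb Hs]].
  destruct (H b Hb) as [b' [Hb' Hs']].
  exists b'. split; [exact Hb'| eapply ss_trans; eauto].
Qed.

Lemma cov_in : forall D c x, In x D -> covered D c x.
Proof. intros. exists x. split; [left; auto| constructor]. Qed.

Lemma cov_c : forall D c, covered D c c.
Proof. intros. exists c. split; [right; auto| constructor]. Qed.

Lemma cov_sub : forall D c x y, covered D c x -> semisub x y -> covered D c y.
Proof. intros D c x y [b [H1 H2]] H. exists b. split; auto. eapply ss_trans; eauto. Qed.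

Lemma perm_in : forall (D L : list formula) x, Permutation D L -> In x L -> In x D.
Proof. intros. eapply Permutation_in; [symmetry; eauto| auto]. Qed.

Lemma part1 : forall D c (d : deriv D c) a, In a (dformulas d) -> covered D c a.
Proof.
  intros D c d. induction d; simpl; intros x Hx.
  - destruct Hx as [<-|Hx]; [apply cov_c| apply cov_in; auto].
  - destruct Hx as [<-|Hx]; [apply cov_c|].
    apply in_app_or in Hx. destruct Hx as [Hx|Hx]; [apply cov_in; auto|].
    eapply lift; [|exact (IHd x Hx)].
    intros y [Hy| ->].
    + apply (Permutation_in _ p0) in Hy. destruct Hy as [<-|Hy].
      * eapply cov_sub; [apply cov_c| eapply ss_left; constructor].
      * apply cov_in. eapply perm_in; eauto.
    + eapply cov_sub; [apply cov_c| eapply ss_right; constructor].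
  - destruct Hx as [<-|Hx]; [apply cov_c|].
    apply in_app_or in Hx. destruct Hx as [Hx|Hx]; [apply cov_in; auto|].
    eapply lift; [|exact (IHd x Hx)].
    intros y [Hy| ->].
    + apply (Permutation_in _ p0) in Hy. destruct Hy as [<-|[<-|Hy]].
      * eapply cov_sub; [apply cov_c| eapply ss_left; constructor].
      * eapply cov_sub; [apply cov_in; eapply perm_in; [exact p| left; reflexivity]|].
        eapply ss_semi; constructor.
      * apply cov_in. eapply perm_in; [exact p| right; exact Hy].
    + eapply cov_sub; [apply cov_c| eapply ss_right; constructor].
  - destruct Hx as [<-|Hx]; [apply cov_c|].
    apply in_app_or in Hx. destruct Hx as [Hx|Hx]; [apply cov_in; auto|].
    eapply lift; [|exact (IHd x Hx)].
    intros y [Hy| ->]; [|apply cov_c].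
    apply (Permutation_in _ p1) in Hy. destruct Hy as [<-|[<-|Hy]].
    + apply cov_in. eapply perm_in; [exact p0| left; reflexivity].
    + eapply cov_sub; [apply cov_in; eapply perm_in; [exact p0| right; left; reflexivity]|].
      eapply ss_right; constructor.
    + apply cov_in. eapply perm_in; [exact p0| right; right; exact Hy].
  - destruct Hx as [<-|Hx]; [apply cov_c|].
    apply in_app_or in Hx. destruct Hx as [Hx|Hx]; [apply cov_in; auto|].
    assert (Hg : covered D (Var q) (Imp (Imp a b) g))
      by (apply cov_in; eapply perm_in; [exact p| left; reflexivity]).
    apply in_app_or in Hx. destruct Hx as [Hx|Hx].
    + eapply lift; [|exact (IHd1 x Hx)].
      intros y [Hy| ->].
      * apply (Permutation_in _ p0) in Hy. destruct Hy as [<-|[<-|Hy]].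
        -- eapply cov_sub; [exact Hg|]. eapply ss_left. eapply ss_left. constructor.
        -- eapply cov_sub; [exact Hg|]. eapply ss_semi. constructor.
        -- apply cov_in. eapply perm_in; [exact p| right; exact Hy].
      * eapply cov_sub; [exact Hg|]. eapply ss_right. eapply ss_left. constructor.
    + eapply lift; [|exact (IHd2 x Hx)].
      intros y [Hy| ->]; [|apply cov_c].
      apply (Permutation_in _ p1) in Hy. destruct Hy as [<-|Hy].
      * eapply cov_sub; [exact Hg|]. eapply ss_right. constructor.
      * apply cov_in. eapply perm_in; [exact p| right; exact Hy].
Qed.

Lemma ss_size : forall r a, semisub r a -> fsize a <= fsize r.
Proof. intros r a H. induction H; simpl in *; lia. Qed.

Lemma fold_max_le : forall l n, (forall x, In x l -> x <= n) -> fold_right Nat.max 0 l <= n.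
Proof.
  induction l; simpl; intros n H; [lia|].
  apply Nat.max_lub; auto.
Qed.

Theorem lemma2 :
  (forall (D : list formula) (c : formula) (d : deriv D c) (a : formula),
      occurs_in a d -> exists b, (In b D \/ b = c) /\ semisub b a)
  /\
  (forall (r : formula) (d : deriv [] r),
      (forall a, occurs_in a d -> semisub r a /\ fsize a <= fsize r)
      /\ mu d <= fsize r).
Proof.
  assert (H1 : forall (D : list formula) (c : formula) (d : deriv D c) (a : formula),
      occurs_in a d -> exists b, (In b D \/ b = c) /\ semisub b a)
    by (intros; apply part1 with (d := d); auto).
  split; [exact H1|].
  intros r d.
  assert (H2 : forall a, occurs_in a d -> semisub r a /\ fsize a <= fsize r).
  { intros a Ha. destruct (H1 _ _ d a Ha) as [b [[Hb| ->] Hs]]; [destruct Hb|].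
    split; auto. apply ss_size; auto. }
  split; [exact H2|].
  unfold mu. apply fold_max_le. intros x Hx.
  apply in_map_iff in Hx. destruct Hx as [a [<- Ha]]. apply H2. exact Ha.
Qed.
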